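(* Let $H$ be a complex-valued harmonic function in $\mathbb{D}=\{|z|<1\}$ and let $u(z)=H(z)+\frac12(1-|z|^{2})\big(zH_z(z)+\overline{z}H_{\overline{z}}(z)\big)$. If $u$ maps $\mathbb{D}$ into $\mathbb{D}$, then there exists a constant $c$ with $0<c<\infty$ such that $$(1-|z|^{2})\big(|u_z(z)|+|u_{\overline{z}}(z)|\big)\le c\quad\text{for all } z\in\mathbb{D};$$ that is, $u$ is a Bloch function. *)

(* Defs.v *)
From Stdlib Require Import Reals.
From Coquelicot Require Import Coquelicot.
Open Scope R_scope.

Definition in_disk (z : C) : Prop := Cmod z < 1.

Definition dxr (g : C -> R) (z : C) : R :=
  Derive (fun t => g (t, Im z)) (Re z).
Definition dyr (g : C -> R) (z : C) : R :=
  Derive (fun t => g (Re z, t)) (Im z).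

Definition C2_on_disk (g : C -> R) : Prop :=
  forall z, in_disk z ->
    ex_derive (fun t => g (t, Im z)) (Re z) /\
    ex_derive (fun t => g (Re z, t)) (Im z) /\
    ex_derive (fun t => dxr g (t, Im z)) (Re z) /\
    ex_derive (fun t => dxr g (Re z, t)) (Im z) /\
    ex_derive (fun t => dyr g (t, Im z)) (Re z) /\
    ex_derive (fun t => dyr g (Re z, t)) (Im z) /\
    continuous g z /\
    continuous (dxr g) z /\ continuous (dyr g) z /\
    continuous (dxr (dxr g)) z /\ continuous (dyr (dxr g)) z /\
    continuous (dxr (dyr g)) z /\ continuous (dyr (dyr g)) z.

Definition real_harmonic_on_disk (g : C -> R) : Prop :=
  C2_on_disk g /\
  forall z, in_disk z -> dxr (dxr g) z + dyr (dyr g) z = 0.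

Definition harmonic_on_disk (H : C -> C) : Prop :=
  real_harmonic_on_disk (fun z => Re (H z)) /\
  real_harmonic_on_disk (fun z => Im (H z)).

Definition dx (f : C -> C) (z : C) : C :=
  (dxr (fun w => Re (f w)) z, dxr (fun w => Im (f w)) z).
Definition dy (f : C -> C) (z : C) : C :=
  (dyr (fun w => Re (f w)) z, dyr (fun w => Im (f w)) z).

Definition dz (f : C -> C) (z : C) : C :=
  (/ 2 * (dx f z - Ci * dy f z))%C.
Definition dzb (f : C -> C) (z : C) : C :=
  (/ 2 * (dx f z + Ci * dy f z))%C.

Definition u_of (H : C -> C) (z : C) : C :=
  (H z + / 2 * RtoC (1 - Cmod z ^ 2) * (z * dz H z + Cconj z * dzb H z))%C.

(* Main.v *)
Require Import Defs.
From Stdlib Require Import Reals.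
From Coquelicot Require Import Coquelicot.
Open Scope R_scope.
From Stdlib Require Import Lra Psatz Classical ClassicalEpsilon.
From Stdlib Require List.
Import List.ListNotations.

Lemma deriv_eps (f : R -> R) x l eps :
  is_derive f x l -> 0 < eps -> exists d, 0 < d /\ forall h, 0 < h < d ->
   (l - eps) * h <= f (x + h) - f x <= (l + eps) * h /\
   - (l + eps) * h <= f (x - h) - f x <= - (l - eps) * h.
Proof.
  intros Hd He. apply is_derive_Reals in Hd.
  destruct (Hd eps He) as [d Hdd].
  exists d; split; [apply cond_pos|]. intros h [h0 hd].
  assert (A := Hdd h (Rgt_not_eq _ _ h0) ltac:(rewrite Rabs_pos_eq; lra)).
  assert (B := Hdd (-h) ltac:(lra) ltac:(rewrite Rabs_Ropp, Rabs_pos_eq; lra)).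
  apply Rabs_lt_between in A. apply Rabs_lt_between in B.
  replace (x + - h) with (x - h) in B by ring.
  set (q1 := (f (x + h) - f x)) in *. set (q2 := (f (x - h) - f x)) in *.
  assert (E1 : q1 = (q1 / h) * h) by (field; lra).
  assert (E2 : q2 = (q2 / - h) * (- h)) by (field; lra).
  set (r1 := q1 / h) in *. set (r2 := q2 / - h) in *.
  rewrite E1, E2. split; split; nra.
Qed.

Lemma small_pos d e : 0 < d -> 0 < e -> exists h, 0 < h /\ h < d /\ h < e.
Proof.
  intros. destruct (Rle_dec d e).
  - exists (d/2). lra.
  - exists (e/2). lra.
Qed.

Lemma deriv_right_le (f : R -> R) x l K d :
  is_derive f x l -> 0 < d -> (forall h, 0 < h < d -> f (x + h) - f x <= K * h) -> l <= K.
Proof.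
  intros Hd Hd0 H. apply Rnot_lt_le; intro Hlt.
  destruct (deriv_eps f x l ((l - K)/2) Hd ltac:(lra)) as [e [He Hh]].
  destruct (small_pos d e Hd0 He) as [h [Hh1 [Hh2 Hh3]]].
  destruct (Hh h ltac:(lra)) as [[A _] _]. specialize (H h ltac:(lra)).
  nra.
Qed.

Lemma deriv_left_ge (f : R -> R) x l K d :
  is_derive f x l -> 0 < d -> (forall h, 0 < h < d -> f (x - h) - f x <= K * h) -> - K <= l.
Proof.
  intros Hd Hd0 H. apply Rnot_lt_le; intro Hlt.
  destruct (deriv_eps f x l ((-K - l)/2) Hd ltac:(lra)) as [e [He Hh]].
  destruct (small_pos d e Hd0 He) as [h [Hh1 [Hh2 Hh3]]].
  destruct (Hh h ltac:(lra)) as [_ [A _]]. specialize (H h ltac:(lra)).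
  nra.
Qed.

Lemma deriv_sym_le (f : R -> R) x l K d :
  is_derive f x l -> 0 < d -> (forall h, 0 < h < d -> f (x + h) - f (x - h) <= 2 * K * h) -> l <= K.
Proof.
  intros Hd Hd0 H. apply Rnot_lt_le; intro Hlt.
  destruct (deriv_eps f x l ((l - K)/2) Hd ltac:(lra)) as [e [He Hh]].
  destruct (small_pos d e Hd0 He) as [h [Hh1 [Hh2 Hh3]]].
  destruct (Hh h ltac:(lra)) as [[A _] [_ B]]. specialize (H h ltac:(lra)).
  nra.
Qed.

Lemma fermat (f : R -> R) x r :
  0 < r -> ex_derive f x -> (forall t, Rabs (t - x) < r -> f t <= f x) -> Derive f x = 0.
Proof.
  intros Hr Hd Hm. pose proof (Derive_correct f x Hd) as D.
  assert (A : Derive f x <= 0).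
  { apply (deriv_right_le f x _ 0 r D Hr). intros h Hh.
    assert (f (x+h) <= f x) by (apply Hm; rewrite Rabs_pos_eq; lra). lra. }
  assert (B : - 0 <= Derive f x).
  { apply (deriv_left_ge f x _ 0 r D Hr). intros h Hh.
    assert (f (x-h) <= f x) by (apply Hm; rewrite Rabs_left; lra). lra. }
  lra.
Qed.

Lemma max_second (f : R -> R) x r :
  0 < r -> (forall t, Rabs (t - x) < r -> ex_derive f t) ->
  ex_derive (Derive f) x -> (forall t, Rabs (t - x) < r -> f t <= f x) ->
  Derive (Derive f) x <= 0.
Proof.
  intros Hr Hd Hd2 Hm.
  assert (F0 : Derive f x = 0).
  { apply (fermat f x r Hr); auto. apply Hd. rewrite Rminus_diag, Rabs_R0; lra. }
  apply Rnot_lt_le; intro HL. set (L := Derive (Derive f) x) in *.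
  destruct (deriv_eps (Derive f) x L (L/2) (Derive_correct _ _ Hd2) ltac:(lra)) as [e [He Hh]].
  destruct (small_pos r e Hr He) as [h0 [H1 [H2 H3]]].
  assert (Dk : forall c, x <= c <= x + h0 ->
     derivable_pt_lim (fun t => f t - L/4 * (t - x)^2) c (Derive f c - L/2 * (c - x))).
  { intros c Hc. apply is_derive_Reals. auto_derive.
    - apply Hd. rewrite Rabs_pos_eq; lra.
    - simpl. change (fun x0 => f x0) with f. clearbody L. generalize (Derive f c). intro r1. field. }
  destruct (MVT_cor2 _ _ x (x + h0) ltac:(lra) Dk) as [c [Ec Hc]].
  assert (Pc : 0 <= Derive f c - L/2 * (c - x)).
  { destruct (Hh (c - x) ltac:(lra)) as [[A _] _].
    replace (x + (c - x)) with c in A by ring. rewrite F0 in A. nra. }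
  assert (f (x + h0) <= f x) by (apply Hm; rewrite Rabs_pos_eq; lra).
  replace ((x + h0 - x)^2) with (h0 * h0) in Ec by ring.
  replace ((x - x)^2) with 0 in Ec by ring.
  replace (x + h0 - x) with h0 in Ec by ring.
  assert (P2 : 0 <= (Derive f c - L/2*(c-x)) * h0) by (apply Rmult_le_pos; lra).
  assert (0 < L/4 * (h0 * h0)) by (apply Rmult_lt_0_compat; nra).
  revert Ec P2. generalize (Derive f c - L/2*(c-x)). intros. lra.
Qed.

Definition cont2 (g : C -> R) (z : C) : Prop :=
  forall eps, 0 < eps -> exists d, 0 < d /\ forall x y, Rabs (x - Re z) < d -> Rabs (y - Im z) < d -> Rabs (g (x,y) - g z) < eps.

Lemma cont2_of (g : C -> R) z : continuous g z -> cont2 g z.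
Proof.
  intros Hc eps He.
  destruct (proj1 (filterlim_locally g (g z)) Hc (mkposreal eps He)) as [d Hd].
  exists d; split; [apply cond_pos|].
  intros x y Hx Hy. apply (Hd (x,y)). split; simpl; assumption.
Qed.

Lemma list_max_lt {T} (l : list T) (g : T -> R) (P : T -> Prop) S :
  (forall t, List.In t l -> P t -> g t < S) ->
  exists B, B < S /\ forall t, List.In t l -> P t -> g t <= B.
Proof.
  induction l as [|a l IH]; intros H.
  - exists (S - 1). split; [lra|]. intros t [].
  - destruct IH as [B [HB1 HB2]]. { intros t Ht Pt. apply H; simpl; auto. }
    destruct (classic (P a)) as [Pa|nPa].
    + exists (Rmax B (g a)). split.
      * apply Rmax_lub_lt; auto. apply H; simpl; auto.
      * intros t [<-|Ht] Pt. apply Rmax_r. eapply Rle_trans; [apply HB2; auto| apply Rmax_l].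
    + exists B. split; auto. intros t [<-|Ht] Pt; [contradiction|auto].
Qed.

Section EVT.
Variables (K : C -> Prop) (f : C -> R) (a b c d : R).
Hypothesis Hbox : forall z, K z -> a <= Re z <= b /\ c <= Im z <= d.
Hypothesis Hclosed : forall z, ~ K z -> exists r, 0 < r /\ forall x y, Rabs (x - Re z) < r -> Rabs (y - Im z) < r -> ~ K (x,y).
Hypothesis Hne : exists z, K z.
Hypothesis Hcont : forall z, K z -> cont2 f z.

Definition pt (t : Compactness.Tn 2 R) : C := (fst t, fst (snd t)).

Lemma cover (eta : C -> R) : (forall z, K z -> 0 < eta z) ->
  exists l : list C, forall x, K x -> exists t, List.In t l /\ K t /\ f x < f t + eta t.
Proof.
  intros Heta.
  assert (Hex : forall t : Compactness.Tn 2 R, exists r : posreal,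
     (K (pt t) -> forall x y, Rabs (x - Re (pt t)) < r -> Rabs (y - Im (pt t)) < r -> Rabs (f (x,y) - f (pt t)) < eta (pt t)) /\
     (~ K (pt t) -> forall x y, Rabs (x - Re (pt t)) < r -> Rabs (y - Im (pt t)) < r -> ~ K (x,y))).
  { intro t. destruct (classic (K (pt t))) as [Kt|nKt].
    - destruct (Hcont _ Kt (eta (pt t)) (Heta _ Kt)) as [r [Hr Hr2]].
      exists (mkposreal r Hr). split; [|tauto]. intros _; apply Hr2.
    - destruct (Hclosed _ nKt) as [r [Hr Hr2]].
      exists (mkposreal r Hr). split; [tauto|]. intros _; apply Hr2. }
  set (delta := fun t => proj1_sig (constructive_indefinite_description _ (Hex t))).
  assert (Hdelta : forall t, _) by (intro t; exact (proj2_sig (constructive_indefinite_description _ (Hex t)))).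
  destruct (classic (exists l : list (Compactness.Tn 2 R),
     forall x : Compactness.Tn 2 R, Compactness.bounded_n 2 (a,(c,tt)) (b,(d,tt)) x ->
       exists t, List.In t l /\ Compactness.bounded_n 2 (a,(c,tt)) (b,(d,tt)) t /\ Compactness.close_n 2 (delta t) x t)) as [[l Hl]|Hn].
  2:{ exfalso. exact (Compactness.compactness_list 2 (a,(c,tt)) (b,(d,tt)) delta Hn). }
  exists (List.map pt l). intros x Kx.
  destruct (Hbox x Kx) as [Bx By].
  destruct (Hl (Re x, (Im x, tt))) as [t [Hin [_ Hcl]]].
  { simpl. tauto. }
  exists (pt t). split; [apply List.in_map; auto|].
  destruct t as [t1 [t2 []]]. simpl in Hcl. destruct Hcl as [C1 [C2 _]].
  destruct (Hdelta (t1,(t2,tt))) as [D1 D2]. fold (delta (t1,(t2,tt))) in D1, D2.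
  destruct (classic (K (pt (t1,(t2,tt))))) as [Kt|nKt].
  - split; auto. specialize (D1 Kt (Re x) (Im x) C1 C2).
    destruct x as [x1 x2]. apply Rabs_lt_between in D1. simpl in D1 |- *. lra.
  - exfalso. apply (D2 nKt (Re x) (Im x) C1 C2). destruct x; exact Kx.
Qed.

Lemma list_max {T} (l : list T) (g : T -> R) :
  exists B, forall t, List.In t l -> g t <= B.
Proof.
  induction l as [|a0 l IH].
  - exists 0. intros t [].
  - destruct IH as [B HB]. exists (Rmax B (g a0)).
    intros t [<-|Ht]. apply Rmax_r. eapply Rle_trans; [apply HB; auto| apply Rmax_l].
Qed.

Lemma evt : exists p, K p /\ forall q, K q -> f q <= f p.
Proof.
  destruct (cover (fun _ => 1)) as [l0 Hl0]. { intros; lra. }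
  destruct (list_max l0 f) as [B0 HB0].
  set (E := fun v => exists z, K z /\ v = f z).
  assert (Eb : bound E).
  { exists (B0 + 1). intros v [z [Kz ->]]. destruct (Hl0 z Kz) as [t [It [_ Ht]]].
    specialize (HB0 t It). lra. }
  assert (Ene : exists v, E v) by (destruct Hne as [z Kz]; exists (f z); exists z; auto).
  destruct (completeness E Eb Ene) as [S [HS1 HS2]].
  destruct (classic (exists p, K p /\ f p = S)) as [[p [Kp Ep]]|Hno].
  - exists p. split; auto. intros q Kq. rewrite Ep. apply HS1. exists q; auto.
  - exfalso.
    assert (Hlt : forall z, K z -> f z < S).
    { intros z Kz. assert (f z <= S) by (apply HS1; exists z; auto).
      destruct (Rle_lt_or_eq_dec _ _ H) as [|Heq]; auto. exfalso; apply Hno; exists z; auto. }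
    destruct (cover (fun z => (S - f z)/2)) as [l Hl].
    { intros z Kz. specialize (Hlt z Kz). lra. }
    destruct (list_max_lt l (fun t => (S + f t)/2) K S) as [B [HB1 HB2]].
    { intros t _ Kt. specialize (Hlt t Kt). lra. }
    assert (S <= B).
    { apply HS2. intros v [z [Kz ->]]. destruct (Hl z Kz) as [t [It [Kt Ht]]].
      specialize (HB2 t It Kt). simpl in HB2. lra. }
    lra.
Qed.
End EVT.

Definition reg (U : C -> Prop) (g : C -> R) : Prop :=
  forall z, U z ->
    ex_derive (fun t => g (t, Im z)) (Re z) /\
    ex_derive (fun t => g (Re z, t)) (Im z) /\
    ex_derive (fun t => dxr g (t, Im z)) (Re z) /\
    ex_derive (fun t => dyr g (Re z, t)) (Im z) /\
    cont2 g z.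

Definition lap (g : C -> R) (z : C) : R := dxr (dxr g) z + dyr (dyr g) z.

Definition interior (K : C -> Prop) (z : C) : Prop :=
  exists r, 0 < r /\ forall x y, Rabs (x - Re z) < r -> Rabs (y - Im z) < r -> K (x,y).

Lemma interior_max_lap U g p r : reg U g -> 0 < r ->
  (forall x y, Rabs (x - Re p) < r -> Rabs (y - Im p) < r -> U (x,y) /\ g (x,y) <= g p) ->
  lap g p <= 0.
Proof.
  intros Hg Hr Hm. destruct p as [p1 p2].
  assert (Up : U (p1,p2)) by (apply Hm; rewrite Rminus_diag, Rabs_R0; lra).
  destruct (Hg _ Up) as [_ [_ [Hxx [Hyy _]]]].
  assert (A : dxr (dxr g) (p1,p2) <= 0).
  { unfold dxr at 1. simpl.
    apply (max_second (fun t => g (t, p2)) p1 r Hr).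
    - intros t Ht. assert (Ut : U (t,p2)) by (apply Hm; auto; rewrite Rminus_diag, Rabs_R0; lra).
      exact (proj1 (Hg _ Ut)).
    - exact Hxx.
    - intros t Ht. apply Hm; auto. rewrite Rminus_diag, Rabs_R0; lra. }
  assert (B : dyr (dyr g) (p1,p2) <= 0).
  { unfold dyr at 1. simpl.
    apply (max_second (fun t => g (p1, t)) p2 r Hr).
    - intros t Ht. assert (Ut : U (p1,t)) by (apply Hm; auto; rewrite Rminus_diag, Rabs_R0; lra).
      exact (proj1 (proj2 (Hg _ Ut))).
    - exact Hyy.
    - intros t Ht. apply Hm; auto. rewrite Rminus_diag, Rabs_R0; lra. }
  unfold lap. lra.
Qed.

Lemma max_principle (K U : C -> Prop) (g : C -> R) a b c d :
  (forall z, K z -> a <= Re z <= b /\ c <= Im z <= d) ->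
  (forall z, ~ K z -> exists r, 0 < r /\ forall x y, Rabs (x - Re z) < r -> Rabs (y - Im z) < r -> ~ K (x,y)) ->
  (exists z, K z) ->
  (forall z, K z -> U z) -> reg U g ->
  (forall z, K z -> interior K z -> 0 < lap g z) ->
  exists p, K p /\ ~ interior K p /\ forall q, K q -> g q <= g p.
Proof.
  intros Hbox Hcl Hne HKU Hg Hlap.
  destruct (evt K g a b c d Hbox Hcl Hne) as [p [Kp Hp]].
  { intros z Kz. exact (proj2 (proj2 (proj2 (proj2 (Hg z (HKU z Kz)))))). }
  exists p. split; auto. split; auto.
  intros Hint. pose proof (Hlap p Kp Hint) as L.
  destruct Hint as [r [Hr Hin]].
  assert (lap g p <= 0); [|lra].
  apply (interior_max_lap U g p r Hg Hr). intros x y Hx Hy.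
  split; [apply HKU|apply Hp]; apply Hin; auto.
Qed.

Definition opn (U : C -> Prop) : Prop :=
  forall z, U z -> exists r, 0 < r /\ forall x y, Rabs (x - Re z) < r -> Rabs (y - Im z) < r -> U (x,y).

Lemma opn_locx U z : opn U -> U z -> locally (Re z) (fun t => U (t, Im z)).
Proof.
  intros HU Uz. destruct (HU z Uz) as [r [Hr H]]. exists (mkposreal r Hr).
  intros t Ht. apply H. exact Ht. rewrite Rminus_diag, Rabs_R0; exact Hr.
Qed.

Lemma opn_locy U z : opn U -> U z -> locally (Im z) (fun t => U (Re z, t)).
Proof.
  intros HU Uz. destruct (HU z Uz) as [r [Hr H]]. exists (mkposreal r Hr).
  intros t Ht. apply H. rewrite Rminus_diag, Rabs_R0; exact Hr. exact Ht.
Qed.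

Lemma opn_and U V : opn U -> opn V -> opn (fun z => U z /\ V z).
Proof.
  intros HU HV z [Uz Vz]. destruct (HU z Uz) as [r1 [H1 A1]]. destruct (HV z Vz) as [r2 [H2 A2]].
  exists (Rmin r1 r2). split. apply Rmin_glb_lt; auto.
  intros x y Hx Hy. split; [apply A1|apply A2];
  (eapply Rlt_le_trans; [eassumption|]); first [apply Rmin_l | apply Rmin_r].
Qed.

Lemma abs_s s u : (s = 1 \/ s = -1) -> Rabs (s * u) = Rabs u.
Proof.
  intros [-> | ->]. rewrite Rmult_1_l; auto.
  replace (-1 * u) with (- u) by ring. apply Rabs_Ropp.
Qed.

Definition aff (al s be : R) (z : C) : C := (al + s * Re z, be + Im z).

Lemma opn_aff U al s be : (s = 1 \/ s = -1) -> opn U -> opn (fun z => U (aff al s be z)).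
Proof.
  intros Hs HU z Uz. destruct (HU _ Uz) as [r [Hr H]]. exists r. split; auto.
  intros x y Hx Hy. apply H; simpl.
  - replace (al + s * x - (al + s * Re z)) with (s * (x - Re z)) by ring.
    rewrite abs_s; auto.
  - replace (be + y - (be + Im z)) with (y - Im z) by ring. auto.
Qed.

Lemma Derive_lin al s x : Derive (fun t => al + s * t) x = s.
Proof. apply is_derive_unique. auto_derive; auto. ring. Qed.

Lemma ex_derive_lin al s x : ex_derive (fun t => al + s * t) x.
Proof. auto_derive; auto. Qed.

Lemma Derive_aff (f : R -> R) al s x : ex_derive f (al + s * x) ->
  Derive (fun t => f (al + s * t)) x = s * Derive f (al + s * x).
Proof.
  intros H. rewrite (Derive_comp f (fun t => al + s * t) x H (ex_derive_lin al s x)).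
  rewrite Derive_lin. reflexivity.
Qed.

Lemma ex_derive_aff (f : R -> R) al s x : ex_derive f (al + s * x) ->
  ex_derive (fun t => f (al + s * t)) x.
Proof. intros H. apply (ex_derive_comp f (fun t => al + s * t) x H (ex_derive_lin al s x)). Qed.

Lemma cont2_aff g al s be z : (s = 1 \/ s = -1) -> cont2 g (aff al s be z) -> cont2 (fun w => g (aff al s be w)) z.
Proof.
  intros Hs Hc eps He. destruct (Hc eps He) as [d [Hd H]]. exists d; split; auto.
  intros x y Hx Hy. apply H; simpl.
  - replace (al + s * x - (al + s * Re z)) with (s * (x - Re z)) by ring.
    rewrite abs_s; auto.
  - replace (be + y - (be + Im z)) with (y - Im z) by ring. auto.
Qed.

Section Aff.
Variables (U : C -> Prop) (g : C -> R) (al s be : R).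
Hypothesis Hs : s = 1 \/ s = -1.
Hypothesis HU : opn U.
Hypothesis Hg : reg U g.
Let gT := fun z => g (aff al s be z).

Lemma dxr_aff z : U (aff al s be z) -> dxr gT z = s * dxr g (aff al s be z).
Proof.
  intros Uz. destruct (Hg _ Uz) as [H1 _]. unfold dxr, gT, aff. simpl.
  apply (Derive_aff (fun v => g (v, be + Im z))). exact H1.
Qed.

Lemma dyr_aff z : U (aff al s be z) -> dyr gT z = dyr g (aff al s be z).
Proof.
  intros Uz. destruct (Hg _ Uz) as [_ [H1 _]]. unfold dyr, gT, aff. simpl.
  transitivity (Derive (fun t => g (al + s * Re z, be + 1 * t)) (Im z)).
  { apply Derive_ext. intro t. rewrite Rmult_1_l. reflexivity. }
  rewrite (Derive_aff (fun v => g (al + s * Re z, v)) be 1 (Im z)).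
  - rewrite !Rmult_1_l. reflexivity.
  - rewrite Rmult_1_l. exact H1.
Qed.

Lemma locx_aff z : U (aff al s be z) -> locally (Re z) (fun t => U (aff al s be (t, Im z))).
Proof. intros Uz. apply (opn_locx (fun w => U (aff al s be w)) z (opn_aff U al s be Hs HU) Uz). Qed.
Lemma locy_aff z : U (aff al s be z) -> locally (Im z) (fun t => U (aff al s be (Re z, t))).
Proof. intros Uz. apply (opn_locy (fun w => U (aff al s be w)) z (opn_aff U al s be Hs HU) Uz). Qed.

Lemma ex1 (f : R -> R) b x : ex_derive f (b + x) -> ex_derive (fun t => f (b + t)) x.
Proof.
  intros H. apply (ex_derive_ext (fun t => f (b + 1 * t))). intro t; rewrite Rmult_1_l; auto.
  apply ex_derive_aff. rewrite Rmult_1_l; auto.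
Qed.
Lemma D1 (f : R -> R) b x : ex_derive f (b + x) -> Derive (fun t => f (b + t)) x = Derive f (b + x).
Proof.
  intros H. transitivity (Derive (fun t => f (b + 1 * t)) x).
  apply Derive_ext. intro t; rewrite Rmult_1_l; auto.
  rewrite Derive_aff; rewrite !Rmult_1_l; [reflexivity| auto].
Qed.

Lemma reg_aff : reg (fun z => U (aff al s be z)) gT.
Proof.
  intros z Uz. destruct (Hg _ Uz) as [A [B [Cc [Dd E]]]]. simpl in A, B, Cc, Dd.
  split; [|split; [|split; [|split]]].
  - unfold gT, aff; simpl. apply (ex_derive_aff (fun v => g (v, be + Im z))). exact A.
  - unfold gT, aff; simpl. apply (ex1 (fun v => g (al + s * Re z, v))). exact B.
  - apply (ex_derive_ext_loc (fun t => s * dxr g (al + s * t, be + Im z))).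
    + eapply filter_imp; [|apply locx_aff; exact Uz]. intros t Ut. simpl.
      first [apply (dxr_aff (t, Im z) Ut) | symmetry; apply (dxr_aff (t, Im z) Ut)].
    + apply ex_derive_scal. apply (ex_derive_aff (fun v => dxr g (v, be + Im z))). exact Cc.
  - apply (ex_derive_ext_loc (fun t => dyr g (al + s * Re z, be + t))).
    + eapply filter_imp; [|apply locy_aff; exact Uz]. intros t Ut. simpl.
      first [apply (dyr_aff (Re z, t) Ut) | symmetry; apply (dyr_aff (Re z, t) Ut)].
    + apply (ex1 (fun v => dyr g (al + s * Re z, v))). exact Dd.
  - apply cont2_aff; auto.
Qed.

Lemma lap_aff z : U (aff al s be z) -> lap gT z = lap g (aff al s be z).
Proof.
  intros Uz. destruct (Hg _ Uz) as [A [B [Cc [Dd E]]]]. simpl in A, B, Cc, Dd.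
  unfold lap.
  assert (X : dxr (dxr gT) z = dxr (dxr g) (aff al s be z)).
  { unfold dxr at 1.
    rewrite (Derive_ext_loc _ (fun t => s * dxr g (al + s * t, be + Im z))).
    - rewrite Derive_scal. rewrite (Derive_aff (fun v => dxr g (v, be + Im z))); [|exact Cc].
      change (dxr (dxr g) (aff al s be z)) with (Derive (fun v => dxr g (v, be + Im z)) (al + s * Re z)).
      generalize (Derive (fun v => dxr g (v, be + Im z)) (al + s * Re z)); intro r.
      destruct Hs as [-> | ->]; ring.
    - eapply filter_imp; [|apply locx_aff; exact Uz]. intros t Ut. simpl.
      first [apply (dxr_aff (t, Im z) Ut) | symmetry; apply (dxr_aff (t, Im z) Ut)]. }
  assert (Y : dyr (dyr gT) z = dyr (dyr g) (aff al s be z)).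
  { unfold dyr at 1.
    rewrite (Derive_ext_loc _ (fun t => dyr g (al + s * Re z, be + t))).
    - rewrite (D1 (fun v => dyr g (al + s * Re z, v))); [|exact Dd]. reflexivity.
    - eapply filter_imp; [|apply locy_aff; exact Uz]. intros t Ut. simpl.
      first [apply (dyr_aff (Re z, t) Ut) | symmetry; apply (dyr_aff (Re z, t) Ut)]. }
  rewrite X, Y. reflexivity.
Qed.
End Aff.

Lemma cont2_plus f g z : cont2 f z -> cont2 g z -> cont2 (fun w => f w + g w) z.
Proof.
  intros Hf Hg eps He. destruct (Hf (eps/2) ltac:(lra)) as [d1 [H1 A1]].
  destruct (Hg (eps/2) ltac:(lra)) as [d2 [H2 A2]].
  exists (Rmin d1 d2). split. apply Rmin_glb_lt; auto.
  intros x y Hx Hy.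
  assert (Rmin d1 d2 <= d1) by apply Rmin_l. assert (Rmin d1 d2 <= d2) by apply Rmin_r.
  specialize (A1 x y ltac:(lra) ltac:(lra)). specialize (A2 x y ltac:(lra) ltac:(lra)).
  apply Rabs_lt_between in A1. apply Rabs_lt_between in A2. apply Rabs_lt_between. lra.
Qed.

Lemma cont2_mult f g z : cont2 f z -> cont2 g z -> cont2 (fun w => f w * g w) z.
Proof.
  intros Hf Hg eps He.
  set (F := Rabs (f z) + 1). set (G := Rabs (g z) + 1).
  assert (HF : 0 < F) by (unfold F; pose proof (Rabs_pos (f z)); lra).
  assert (HG : 0 < G) by (unfold G; pose proof (Rabs_pos (g z)); lra).
  destruct (Hf (eps / (2 * G)) ltac:(apply Rdiv_lt_0_compat; lra)) as [d1 [H1 A1]].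
  destruct (Hg (Rmin 1 (eps / (2 * F))) ltac:(apply Rmin_glb_lt; [lra| apply Rdiv_lt_0_compat; lra])) as [d2 [H2 A2]].
  exists (Rmin d1 d2). split. apply Rmin_glb_lt; auto.
  intros x y Hx Hy.
  assert (Rmin d1 d2 <= d1) by apply Rmin_l. assert (Rmin d1 d2 <= d2) by apply Rmin_r.
  specialize (A1 x y ltac:(lra) ltac:(lra)). specialize (A2 x y ltac:(lra) ltac:(lra)).
  assert (M1 : Rmin 1 (eps / (2 * F)) <= 1) by apply Rmin_l.
  assert (M2 : Rmin 1 (eps / (2 * F)) <= eps / (2 * F)) by apply Rmin_r.
  replace (f (x,y) * g (x,y) - f z * g z) with ((f (x,y) - f z) * g (x,y) + f z * (g (x,y) - g z)) by ring.
  eapply Rle_lt_trans. apply Rabs_triang. rewrite !Rabs_mult.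
  assert (Gb : Rabs (g (x,y)) <= G).
  { unfold G. replace (g (x,y)) with (g z + (g (x,y) - g z)) by ring.
    eapply Rle_trans. apply Rabs_triang. lra. }
  assert (Fb : Rabs (f z) <= F) by (unfold F; lra).
  assert (E1 : Rabs (f (x,y) - f z) * Rabs (g (x,y)) <= eps / (2 * G) * G).
  { apply Rmult_le_compat; try apply Rabs_pos; lra. }
  assert (E2 : Rabs (f z) * Rabs (g (x,y) - g z) < F * (eps / (2 * F))).
  { apply Rle_lt_trans with (F * Rabs (g (x,y) - g z)).
    apply Rmult_le_compat_r; [apply Rabs_pos| auto].
    apply Rmult_lt_compat_l; lra. }
  replace (eps / (2 * G) * G) with (eps / 2) in E1 by (field; lra).
  replace (F * (eps / (2 * F))) with (eps / 2) in E2 by (field; lra).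
  lra.
Qed.

Lemma cont2_const k z : cont2 (fun _ => k) z.
Proof. intros eps He. exists 1. split; [lra|]. intros. rewrite Rminus_diag, Rabs_R0; auto. Qed.
Lemma cont2_Re z : cont2 (fun w => Re w) z.
Proof. intros eps He. exists eps. split; auto. Qed.
Lemma cont2_Im z : cont2 (fun w => Im w) z.
Proof. intros eps He. exists eps. split; auto. Qed.

Section Scale.
Variables (U : C -> Prop) (g : C -> R) (k : R).
Hypothesis Hg : reg U g.
Let gk := fun z => k * g z.

Lemma dxr_scal z : dxr gk z = k * dxr g z.
Proof. unfold dxr, gk. apply Derive_scal. Qed.
Lemma dyr_scal z : dyr gk z = k * dyr g z.
Proof. unfold dyr, gk. apply Derive_scal. Qed.

Lemma reg_scal : reg U gk.
Proof.
  intros z Uz. destruct (Hg _ Uz) as [A [B [Cc [Dd E]]]].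
  split; [|split; [|split; [|split]]].
  - apply ex_derive_scal. exact A.
  - apply ex_derive_scal. exact B.
  - apply (ex_derive_ext (fun t => k * dxr g (t, Im z))). intro t. symmetry; apply dxr_scal.
    apply ex_derive_scal. exact Cc.
  - apply (ex_derive_ext (fun t => k * dyr g (Re z, t))). intro t. symmetry; apply dyr_scal.
    apply ex_derive_scal. exact Dd.
  - apply cont2_mult. apply cont2_const. exact E.
Qed.

Lemma lap_scal z : lap gk z = k * lap g z.
Proof.
  unfold lap. unfold dxr at 1, dyr at 1.
  rewrite (Derive_ext _ (fun t => k * dxr g (t, Im z))) by (intro t; apply dxr_scal).
  rewrite (Derive_ext (fun t => dyr gk (Re z, t)) (fun t => k * dyr g (Re z, t))) by (intro t; apply dyr_scal).
  rewrite !Derive_scal. change (Derive (fun t => dxr g (t, Im z)) (Re z)) with (dxr (dxr g) z).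
  change (Derive (fun t => dyr g (Re z, t)) (Im z)) with (dyr (dyr g) z).
  generalize (dxr (dxr g) z) (dyr (dyr g) z). intros; ring.
Qed.
End Scale.

Section Sum.
Variables (U1 U2 : C -> Prop) (g1 g2 : C -> R).
Hypothesis HU1 : opn U1.
Hypothesis HU2 : opn U2.
Hypothesis Hg1 : reg U1 g1.
Hypothesis Hg2 : reg U2 g2.
Let gs := fun z => g1 z + g2 z.
Let V := fun z => U1 z /\ U2 z.

Lemma dxr_plus z : V z -> dxr gs z = dxr g1 z + dxr g2 z.
Proof.
  intros [U1z U2z]. unfold dxr, gs. apply Derive_plus.
  exact (proj1 (Hg1 _ U1z)). exact (proj1 (Hg2 _ U2z)).
Qed.
Lemma dyr_plus z : V z -> dyr gs z = dyr g1 z + dyr g2 z.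
Proof.
  intros [U1z U2z]. unfold dyr, gs. apply Derive_plus.
  exact (proj1 (proj2 (Hg1 _ U1z))). exact (proj1 (proj2 (Hg2 _ U2z))).
Qed.

Lemma reg_plus : reg V gs.
Proof.
  intros z Vz. destruct Vz as [U1z U2z].
  destruct (Hg1 _ U1z) as [A1 [B1 [C1 [D1' E1]]]].
  destruct (Hg2 _ U2z) as [A2 [B2 [C2 [D2 E2]]]].
  split; [|split; [|split; [|split]]].
  - apply (ex_derive_plus (fun t => g1 (t, Im z)) (fun t => g2 (t, Im z))); assumption.
  - apply (ex_derive_plus (fun t => g1 (Re z, t)) (fun t => g2 (Re z, t))); assumption.
  - apply (ex_derive_ext_loc (fun t => dxr g1 (t, Im z) + dxr g2 (t, Im z))).
    + eapply filter_imp; [|apply (opn_locx V z (opn_and _ _ HU1 HU2)); split; auto].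
      intros t Vt. symmetry. apply (dxr_plus (t, Im z) Vt).
    + apply (ex_derive_plus (fun t => dxr g1 (t, Im z)) (fun t => dxr g2 (t, Im z))); assumption.
  - apply (ex_derive_ext_loc (fun t => dyr g1 (Re z, t) + dyr g2 (Re z, t))).
    + eapply filter_imp; [|apply (opn_locy V z (opn_and _ _ HU1 HU2)); split; auto].
      intros t Vt. symmetry. apply (dyr_plus (Re z, t) Vt).
    + apply (ex_derive_plus (fun t => dyr g1 (Re z, t)) (fun t => dyr g2 (Re z, t))); assumption.
  - apply cont2_plus; assumption.
Qed.

Lemma lap_plus z : V z -> lap gs z = lap g1 z + lap g2 z.
Proof.
  intros Vz. pose proof Vz as [U1z U2z].
  destruct (Hg1 _ U1z) as [A1 [B1 [C1 [D1' E1]]]].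
  destruct (Hg2 _ U2z) as [A2 [B2 [C2 [D2 E2]]]].
  unfold lap. unfold dxr at 1, dyr at 1.
  rewrite (Derive_ext_loc _ (fun t => dxr g1 (t, Im z) + dxr g2 (t, Im z))).
  2:{ eapply filter_imp; [|apply (opn_locx V z (opn_and _ _ HU1 HU2)); split; auto].
      intros t Vt. apply (dxr_plus (t, Im z) Vt). }
  rewrite (Derive_ext_loc (fun t => dyr gs (Re z, t)) (fun t => dyr g1 (Re z, t) + dyr g2 (Re z, t))).
  2:{ eapply filter_imp; [|apply (opn_locy V z (opn_and _ _ HU1 HU2)); split; auto].
      intros t Vt. apply (dyr_plus (Re z, t) Vt). }
  rewrite !Derive_plus by assumption.
  change (Derive (fun t => dxr g1 (t, Im z)) (Re z)) with (dxr (dxr g1) z).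
  change (Derive (fun t => dxr g2 (t, Im z)) (Re z)) with (dxr (dxr g2) z).
  change (Derive (fun t => dyr g1 (Re z, t)) (Im z)) with (dyr (dyr g1) z).
  change (Derive (fun t => dyr g2 (Re z, t)) (Im z)) with (dyr (dyr g2) z).
  generalize (dxr (dxr g1) z) (dyr (dyr g1) z) (dxr (dxr g2) z) (dyr (dyr g2) z). intros; ring.
Qed.
End Sum.

Definition poly (A B Cx : R) (z : C) : R := A * (Re z * Re z) + B * (Im z * Im z) + Cx * Re z.

Lemma dxr_poly A B Cx z : dxr (poly A B Cx) z = 2 * A * Re z + Cx.
Proof. unfold dxr, poly; simpl. apply is_derive_unique. auto_derive; auto. ring. Qed.
Lemma dyr_poly A B Cx z : dyr (poly A B Cx) z = 2 * B * Im z.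
Proof. unfold dyr, poly; simpl. apply is_derive_unique. auto_derive; auto. ring. Qed.

Lemma reg_poly A B Cx : reg (fun _ => True) (poly A B Cx).
Proof.
  intros z _. split; [|split; [|split; [|split]]].
  - unfold poly; simpl. auto_derive; auto.
  - unfold poly; simpl. auto_derive; auto.
  - apply (ex_derive_ext (fun t => 2 * A * t + Cx)). intro t. rewrite dxr_poly. reflexivity.
    auto_derive; auto.
  - apply (ex_derive_ext (fun t => 2 * B * t)). intro t. rewrite dyr_poly. reflexivity.
    auto_derive; auto.
  - unfold poly. repeat apply cont2_plus; repeat apply cont2_mult;
      first [apply cont2_const | apply cont2_Re | apply cont2_Im].
Qed.

Lemma lap_poly A B Cx z : lap (poly A B Cx) z = 2 * A + 2 * B.
Proof.
  unfold lap. f_equal.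
  - unfold dxr at 1. apply is_derive_unique.
    apply (is_derive_ext (fun t => 2 * A * t + Cx)).
    + intro t. rewrite dxr_poly. reflexivity.
    + auto_derive; auto; ring.
  - unfold dyr at 1. apply is_derive_unique.
    apply (is_derive_ext (fun t => 2 * B * t)).
    + intro t. rewrite dyr_poly. reflexivity.
    + auto_derive; auto; ring.
Qed.

Lemma opn_True : opn (fun _ => True).
Proof. intros z _. exists 1. split; auto; lra. Qed.

Definition swp (z : C) : C := (Im z, Re z).

Lemma dxr_swp g z : dxr (fun w => g (swp w)) z = dyr g (swp z).
Proof. reflexivity. Qed.
Lemma dyr_swp g z : dyr (fun w => g (swp w)) z = dxr g (swp z).
Proof. reflexivity. Qed.
Lemma lap_swp g z : lap (fun w => g (swp w)) z = lap g (swp z).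
Proof. unfold lap. change (dyr (dyr g) (swp z) + dxr (dxr g) (swp z) = dxr (dxr g) (swp z) + dyr (dyr g) (swp z)). ring. Qed.

Lemma reg_swp U g : reg U g -> reg (fun z => U (swp z)) (fun w => g (swp w)).
Proof.
  intros Hg z Uz. destruct (Hg _ Uz) as [A [B [Cc [Dd E]]]].
  split; [exact B|split; [exact A|split; [exact Dd|split; [exact Cc|]]]].
  intros eps He. destruct (E eps He) as [d [Hd H]]. exists d. split; auto.
  intros x y Hx Hy. apply (H y x); auto.
Qed.

Lemma opn_swp U : opn U -> opn (fun z => U (swp z)).
Proof.
  intros HU z Uz. destruct (HU _ Uz) as [r [Hr H]]. exists r; split; auto.
  intros x y Hx Hy. apply (H y x); auto.
Qed.

Definition rect a b c d (z : C) : Prop := a <= Re z <= b /\ c <= Im z <= d.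

Lemma rect_closed a b c d z : ~ rect a b c d z ->
  exists r, 0 < r /\ forall x y, Rabs (x - Re z) < r -> Rabs (y - Im z) < r -> ~ rect a b c d (x,y).
Proof.
  intros Hn. unfold rect in Hn.
  destruct (Rlt_or_le (Re z) a) as [H1|H1];
  [|destruct (Rlt_or_le b (Re z)) as [H2|H2];
  [|destruct (Rlt_or_le (Im z) c) as [H3|H3];
  [|destruct (Rlt_or_le d (Im z)) as [H4|H4]; [|exfalso; tauto]]]].
  - exists (a - Re z). split; [lra|]. intros x y Hx _ [[Hx1 _] _]. simpl in Hx1.
    apply Rabs_lt_between in Hx. lra.
  - exists (Re z - b). split; [lra|]. intros x y Hx _ [[_ Hx1] _]. simpl in Hx1.
    apply Rabs_lt_between in Hx. lra.
  - exists (c - Im z). split; [lra|]. intros x y _ Hy [_ [Hy1 _]]. simpl in Hy1.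
    apply Rabs_lt_between in Hy. lra.
  - exists (Im z - d). split; [lra|]. intros x y _ Hy [_ [_ Hy1]]. simpl in Hy1.
    apply Rabs_lt_between in Hy. lra.
Qed.

Lemma rect_boundary a b c d z : rect a b c d z -> ~ interior (rect a b c d) z ->
  Re z = a \/ Re z = b \/ Im z = c \/ Im z = d.
Proof.
  intros [[H1 H2] [H3 H4]] Hn.
  destruct (Req_dec (Re z) a); auto. destruct (Req_dec (Re z) b); auto.
  destruct (Req_dec (Im z) c); auto. destruct (Req_dec (Im z) d); auto.
  exfalso. apply Hn.
  exists (Rmin (Rmin (Re z - a) (b - Re z)) (Rmin (Im z - c) (d - Im z))).
  assert (m1 := Rmin_l (Rmin (Re z - a) (b - Re z)) (Rmin (Im z - c) (d - Im z))).
  assert (m2 := Rmin_r (Rmin (Re z - a) (b - Re z)) (Rmin (Im z - c) (d - Im z))).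
  assert (m3 := Rmin_l (Re z - a) (b - Re z)). assert (m4 := Rmin_r (Re z - a) (b - Re z)).
  assert (m5 := Rmin_l (Im z - c) (d - Im z)). assert (m6 := Rmin_r (Im z - c) (d - Im z)).
  split.
  - repeat apply Rmin_glb_lt; lra.
  - intros x y Hx Hy. apply Rabs_lt_between in Hx. apply Rabs_lt_between in Hy.
    unfold rect; simpl. lra.
Qed.

Section Grad.
Variables (U : C -> Prop) (g : C -> R) (x0 y0 a M : R).
Hypothesis HU : opn U.
Hypothesis Hg : reg U g.
Hypothesis Ha : 0 < a.
Let B := rect (x0 - a) (x0 + a) (y0 - a) (y0 + a).
Hypothesis HB : forall z, B z -> U z.
Hypothesis Hlap : forall z, B z -> lap g z = 0.
Hypothesis Hbd : forall z, B z -> Rabs (g z) <= M.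

Let gp := fun z => g (aff x0 1 y0 z).
Let gm := fun z => g (aff x0 (-1) y0 z).
Let Up := fun z => U (aff x0 1 y0 z).
Let Um := fun z => U (aff x0 (-1) y0 z).

Lemma B_aff s z : (s = 1 \/ s = -1) -> rect 0 a (-a) a z -> B (aff x0 s y0 z).
Proof.
  intros Hs [[H1 H2] [H3 H4]]. unfold B, rect, aff; simpl.
  destruct Hs as [-> | ->]; split; split; lra.
Qed.

Lemma key_eps m eps h : m * (a * a) = M -> 0 < eps -> 0 < h < a ->
  g (x0 + h, y0) - g (x0 - h, y0) <= 2 * (2 * m * a) * h + 4 * eps * (a * a).
Proof.
  intros Hm He Hh.
  assert (M0 : 0 <= M).
  { eapply Rle_trans; [apply Rabs_pos| apply (Hbd (x0,y0))]. unfold B, rect; simpl; split; split; lra. }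
  assert (m0 : 0 <= m).
  { destruct (Rle_or_lt 0 m); auto. assert (m * (a*a) < 0) by (apply Rmult_neg_pos; nra). lra. }
  set (P := poly (m + eps) (- m + eps) (- 2 * m * a)).
  set (g2 := fun z => (-1/2) * gm z + P z).
  set (phi := fun z => (1/2) * gp z + g2 z).
  set (V2 := fun z => Um z /\ True).
  set (V := fun z => Up z /\ V2 z).
  assert (oUp : opn Up) by (apply opn_aff; auto).
  assert (oUm : opn Um) by (apply opn_aff; auto).
  assert (rgp : reg Up gp) by (apply reg_aff; auto).
  assert (rgm : reg Um gm) by (apply reg_aff; auto).
  assert (rg1 : reg Up (fun z => (1/2) * gp z)) by (apply reg_scal; auto).
  assert (rg2 : reg V2 g2).
  { apply (reg_plus Um (fun _ => True) (fun z => (-1/2) * gm z) P oUm opn_True).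
    apply reg_scal; auto. apply reg_poly. }
  assert (oV2 : opn V2) by (apply opn_and; auto; apply opn_True).
  assert (rphi : reg V phi) by (apply (reg_plus Up V2 (fun z => (1/2) * gp z) g2 oUp oV2 rg1 rg2)).
  set (K := rect 0 a (-a) a).
  assert (KV : forall z, K z -> V z).
  { intros z Kz. split; [|split; auto]; apply HB; apply B_aff; auto. }
  assert (Lphi : forall z, K z -> lap phi z = 4 * eps).
  { intros z Kz. destruct (KV z Kz) as [Upz V2z].
    unfold phi. rewrite (lap_plus Up V2 (fun z => (1/2) * gp z) g2 oUp oV2 rg1 rg2 z (conj Upz V2z)).
    unfold g2. rewrite (lap_plus Um (fun _ => True) (fun z => (-1/2) * gm z) P oUm opn_True
       ltac:(apply reg_scal; auto) (reg_poly _ _ _) z V2z).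
    rewrite (lap_scal gp (1/2) z), (lap_scal gm (-1/2) z).
    unfold gp, gm. rewrite (lap_aff U g x0 1 y0 (or_introl eq_refl) HU Hg z Upz).
    rewrite (lap_aff U g x0 (-1) y0 (or_intror eq_refl) HU Hg z (proj1 V2z)).
    rewrite !Hlap by (apply B_aff; auto). unfold P. rewrite lap_poly. lra. }
  destruct (max_principle K V phi 0 a (-a) a) as [p [Kp [Hnint Hmax]]].
  - intros z Kz; exact Kz.
  - intros z Hz. apply rect_closed; exact Hz.
  - exists (0,0). unfold K, rect; simpl; split; split; lra.
  - exact KV.
  - exact rphi.
  - intros z Kz _. rewrite Lphi; auto. lra.
  - assert (Hphi : forall z, K z -> phi z = (1/2) * g (x0 + Re z, y0 + Im z) - (1/2) * g (x0 - Re z, y0 + Im z)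
        + (m + eps) * (Re z * Re z) + (- m + eps) * (Im z * Im z) - 2 * m * a * Re z).
    { intros z Kz. unfold phi, g2, gp, gm, P, poly, aff. simpl.
      replace (x0 + 1 * Re z) with (x0 + Re z) by ring.
      replace (x0 + -1 * Re z) with (x0 - Re z) by ring. field. }
    assert (Bp : phi p <= 2 * eps * (a * a)).
    { rewrite (Hphi p Kp). destruct Kp as [[K1 K2] [K3 K4]].
      assert (G1 : Rabs (g (x0 + Re p, y0 + Im p)) <= M).
      { apply Hbd. unfold B, rect; simpl; split; split; lra. }
      assert (G2 : Rabs (g (x0 - Re p, y0 + Im p)) <= M).
      { apply Hbd. unfold B, rect; simpl; split; split; lra. }
      apply Rabs_le_between in G1. apply Rabs_le_between in G2.
      assert (Sq : Im p * Im p <= a * a) by nra.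
      assert (Sq2 : 0 <= m * (Im p * Im p)) by (apply Rmult_le_pos; nra).
      assert (Rx : m * (Re p * (Re p - 2 * a)) <= 0).
      { assert (Re p * (Re p - 2 * a) <= 0) by nra. nra. }
      assert (Sx : Re p * Re p <= a * a) by nra.
      assert (ex : eps * (Re p * Re p) <= eps * (a * a)) by (apply Rmult_le_compat_l; lra).
      assert (ey : eps * (Im p * Im p) <= eps * (a * a)) by (apply Rmult_le_compat_l; lra).
      destruct (rect_boundary 0 a (-a) a p (conj (conj K1 K2) (conj K3 K4)) Hnint) as [E|[E|[E|E]]].
      - rewrite E. replace (x0 + 0) with (x0 - 0) by ring.
        rewrite E in Rx. nra.
      - rewrite E. rewrite E in Rx, G1, G2. nra.
      - rewrite E. rewrite E in G1, G2. nra.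
      - rewrite E. rewrite E in G1, G2. nra. }
    assert (Kh : K (h, 0)) by (unfold K, rect; simpl; split; split; lra).
    pose proof (Hmax _ Kh) as Hm2. rewrite (Hphi _ Kh) in Hm2. simpl in Hm2.
    replace (y0 + 0) with y0 in Hm2 by ring. nra.
Qed.

Lemma grad_x : dxr g (x0, y0) <= 2 * M / a.
Proof.
  set (m := M / (a * a)).
  assert (Hm : m * (a * a) = M) by (unfold m; field; lra).
  assert (E : 2 * M / a = 2 * m * a) by (unfold m; field; lra).
  rewrite E.
  assert (U0 : U (x0, y0)) by (apply HB; unfold B, rect; simpl; split; split; lra).
  destruct (Hg _ U0) as [A _]. simpl in A.
  apply (deriv_sym_le (fun t => g (t, y0)) x0 _ (2 * m * a) a (Derive_correct _ _ A) Ha).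
  intros h Hh. apply le_epsilon. intros eps He.
  pose proof (key_eps m (eps / (4 * (a * a))) h Hm ltac:(apply Rdiv_lt_0_compat; nra) Hh) as K.
  replace (4 * (eps / (4 * (a * a))) * (a * a)) with eps in K by (field; lra).
  lra.
Qed.
End Grad.

Lemma grad_x_abs U g x0 y0 a M : opn U -> reg U g -> 0 < a ->
  (forall z, rect (x0 - a) (x0 + a) (y0 - a) (y0 + a) z -> U z) ->
  (forall z, rect (x0 - a) (x0 + a) (y0 - a) (y0 + a) z -> lap g z = 0) ->
  (forall z, rect (x0 - a) (x0 + a) (y0 - a) (y0 + a) z -> Rabs (g z) <= M) ->
  Rabs (dxr g (x0, y0)) <= 2 * M / a.
Proof.
  intros HU Hg Ha HB Hl Hb.
  pose proof (grad_x U g x0 y0 a M HU Hg Ha HB Hl Hb) as A.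
  pose proof (grad_x U (fun z => -1 * g z) x0 y0 a M HU (reg_scal U g (-1) Hg) Ha HB) as B.
  rewrite dxr_scal in B. apply Rabs_le_between. split; [|exact A].
  assert (-1 * dxr g (x0,y0) <= 2 * M / a); [|lra].
  apply B.
  - intros z Hz. rewrite lap_scal, Hl; auto. lra.
  - intros z Hz. rewrite (abs_s (-1)); auto.
Qed.

Lemma grad_abs U g x0 y0 a M : opn U -> reg U g -> 0 < a ->
  (forall z, rect (x0 - a) (x0 + a) (y0 - a) (y0 + a) z -> U z) ->
  (forall z, rect (x0 - a) (x0 + a) (y0 - a) (y0 + a) z -> lap g z = 0) ->
  (forall z, rect (x0 - a) (x0 + a) (y0 - a) (y0 + a) z -> Rabs (g z) <= M) ->
  Rabs (dxr g (x0, y0)) <= 2 * M / a /\ Rabs (dyr g (x0, y0)) <= 2 * M / a.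
Proof.
  intros HU Hg Ha HB Hl Hb. split.
  - apply (grad_x_abs U); auto.
  - pose proof (grad_x_abs (fun z => U (swp z)) (fun w => g (swp w)) y0 x0 a M
      (opn_swp U HU) (reg_swp U g Hg) Ha) as A.
    rewrite dxr_swp in A. apply A.
    + intros z [H1 H2]. apply HB. split; assumption.
    + intros z [H1 H2]. rewrite lap_swp. apply Hl. split; assumption.
    + intros z [H1 H2]. apply Hb. split; assumption.
Qed.

Lemma deriv_abs_le (f : R -> R) x l K d : is_derive f x l -> 0 < d ->
  (forall s, 0 < s < d -> Rabs (f (x + s) - f x) <= K * s) -> Rabs l <= K.
Proof.
  intros Hd Hd0 H. apply Rabs_le_between. split.
  - pose proof (deriv_right_le (fun t => - f t) x (- l) K d) as A.
    assert (- l <= K); [|lra]. apply A.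
    + apply (is_derive_opp f x l Hd).
    + exact Hd0.
    + intros h Hh. specialize (H h Hh). apply Rabs_le_between in H. lra.
  - apply (deriv_right_le f x l K d Hd Hd0). intros h Hh. specialize (H h Hh).
    apply Rabs_le_between in H. lra.
Qed.

Section DQ.
Variables (U : C -> Prop) (g : C -> R) (x0 y0 a M1 : R).
Hypothesis HU : opn U.
Hypothesis Hg : reg U g.
Hypothesis Ha : 0 < a.
Let B2 := rect (x0 - 2 * a) (x0 + 2 * a) (y0 - 2 * a) (y0 + 2 * a).
Hypothesis HB : forall z, B2 z -> U z.
Hypothesis Hlap : forall z, B2 z -> lap g z = 0.
Hypothesis Hd : forall z, B2 z -> Rabs (dxr g z) <= M1.

Lemma dq s : 0 < s < a ->
  Rabs (dxr g (x0 + s, y0) - dxr g (x0, y0)) <= 2 * M1 / a * s /\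
  Rabs (dyr g (x0 + s, y0) - dyr g (x0, y0)) <= 2 * M1 / a * s.
Proof.
  intros Hs.
  set (gs := fun z => g (aff s 1 0 z)).
  set (Us := fun z => U (aff s 1 0 z)).
  set (q := fun z => (1/s) * gs z + (-1/s) * g z).
  assert (oUs : opn Us) by (apply opn_aff; auto).
  assert (rgs : reg Us gs) by (apply reg_aff; auto).
  assert (r1 : reg Us (fun z => (1/s) * gs z)) by (apply reg_scal; auto).
  assert (r2 : reg U (fun z => (-1/s) * g z)) by (apply reg_scal; auto).
  assert (rq : reg (fun z => Us z /\ U z) q) by (apply (reg_plus Us U _ _ oUs HU r1 r2)).
  set (B1 := rect (x0 - a) (x0 + a) (y0 - a) (y0 + a)).
  assert (InB : forall z, B1 z -> B2 z /\ B2 (aff s 1 0 z)).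
  { intros z [[H1 H2] [H3 H4]]. unfold B2, rect, aff; simpl. split; split; split; lra. }
  assert (Dq : forall z, B1 z -> dxr q z = (1/s) * (dxr g (aff s 1 0 z) - dxr g z)
                              /\ dyr q z = (1/s) * (dyr g (aff s 1 0 z) - dyr g z)).
  { intros z Bz. destruct (InB z Bz) as [I1 I2].
    assert (Vz : Us z /\ U z) by (split; apply HB; auto).
    unfold q. rewrite (dxr_plus Us U _ _ r1 r2 z Vz), (dyr_plus Us U _ _ r1 r2 z Vz).
    rewrite !dxr_scal, !dyr_scal. unfold gs.
    rewrite (dxr_aff U g s 1 0 Hg z (HB _ I2)), (dyr_aff U g s 1 0 Hg z (HB _ I2)).
    split; field; lra. }
  assert (Hq : Rabs (dxr q (x0, y0)) <= 2 * M1 / a /\ Rabs (dyr q (x0, y0)) <= 2 * M1 / a).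
  { apply (grad_abs (fun z => Us z /\ U z) q x0 y0 a M1 (opn_and _ _ oUs HU) rq Ha).
    - intros z Bz. destruct (InB z Bz). split; apply HB; auto.
    - intros z Bz. destruct (InB z Bz) as [I1 I2].
      assert (Vz : Us z /\ U z) by (split; apply HB; auto).
      unfold q. rewrite (lap_plus Us U _ _ oUs HU r1 r2 z Vz), !lap_scal.
      unfold gs. rewrite (lap_aff U g s 1 0 (or_introl eq_refl) HU Hg z (HB _ I2)).
      rewrite !Hlap by auto. lra.
    - intros z Bz. destruct (InB z Bz) as [I1 I2]. destruct z as [x y].
      destruct Bz as [[H1 H2] [H3 H4]]. simpl in H1, H2, H3, H4.
      assert (Dv : forall c, x <= c <= x + s -> derivable_pt_lim (fun t => g (t, y)) c (dxr g (c, y))).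
      { intros c Hc. apply is_derive_Reals.
        assert (Uc : U (c, y)) by (apply HB; unfold B2, rect; simpl; split; split; lra).
        exact (Derive_correct _ _ (proj1 (Hg _ Uc))). }
      destruct (MVT_cor2 _ _ x (x + s) ltac:(lra) Dv) as [c [Ec Hc]].
      assert (Bc : B2 (c, y)) by (unfold B2, rect; simpl; split; split; lra).
      specialize (Hd _ Bc).
      unfold q, gs, aff. simpl. replace (s + 1 * x) with (x + s) by ring. replace (0 + y) with y by ring.
      replace (1 / s * g (x + s, y) + -1 / s * g (x, y)) with ((g (x + s, y) - g (x, y)) / s) by (field; lra).
      rewrite Ec. replace (dxr g (c, y) * (x + s - x) / s) with (dxr g (c,y)) by (field; lra). exact Hd. }
  assert (B0 : B1 (x0, y0)) by (unfold B1, rect; simpl; split; split; lra).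
  destruct (Dq _ B0) as [E1 E2]. rewrite E1 in Hq. rewrite E2 in Hq. destruct Hq as [Q1 Q2].
  unfold aff in Q1, Q2; simpl in Q1, Q2. replace (s + 1 * x0) with (x0 + s) in Q1, Q2 by ring.
  replace (0 + y0) with y0 in Q1, Q2 by ring.
  rewrite Rabs_mult in Q1, Q2. rewrite (Rabs_pos_eq (1/s)) in Q1, Q2 by (apply Rlt_le, Rdiv_lt_0_compat; lra).
  split.
  - apply (Rmult_le_reg_l (1/s)). apply Rdiv_lt_0_compat; lra.
    replace (1 / s * (2 * M1 / a * s)) with (2 * M1 / a) by (field; lra). exact Q1.
  - apply (Rmult_le_reg_l (1/s)). apply Rdiv_lt_0_compat; lra.
    replace (1 / s * (2 * M1 / a * s)) with (2 * M1 / a) by (field; lra). exact Q2.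
Qed.
End DQ.

Definition nsq (z : C) : R := Re z * Re z + Im z * Im z.

Lemma Cmod_sq z : Cmod z ^ 2 = nsq z.
Proof.
  unfold Cmod, nsq, Re, Im. rewrite pow2_sqrt. ring. nra.
Qed.

Lemma disk_iff z : in_disk z <-> nsq z < 1.
Proof.
  unfold in_disk. rewrite <- Cmod_sq. pose proof (Cmod_ge_0 z). split; intro H0; nra.
Qed.

Lemma cont2_nsq z : cont2 nsq z.
Proof. unfold nsq. apply cont2_plus; apply cont2_mult; first [apply cont2_Re | apply cont2_Im]. Qed.

Lemma cont2_lt f c z : cont2 f z -> f z < c ->
  exists r, 0 < r /\ forall x y, Rabs (x - Re z) < r -> Rabs (y - Im z) < r -> f (x,y) < c.
Proof.
  intros Hf Hz. destruct (Hf (c - f z) ltac:(lra)) as [d [Hd H]]. exists d; split; auto.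
  intros x y Hx Hy. specialize (H x y Hx Hy). apply Rabs_lt_between in H. lra.
Qed.

Lemma cont2_gt f c z : cont2 f z -> c < f z ->
  exists r, 0 < r /\ forall x y, Rabs (x - Re z) < r -> Rabs (y - Im z) < r -> c < f (x,y).
Proof.
  intros Hf Hz. destruct (Hf (f z - c) ltac:(lra)) as [d [Hd H]]. exists d; split; auto.
  intros x y Hx Hy. specialize (H x y Hx Hy). apply Rabs_lt_between in H. lra.
Qed.

Lemma opn_disk : opn in_disk.
Proof.
  intros z Hz. apply disk_iff in Hz. destruct (cont2_lt nsq 1 z (cont2_nsq z) Hz) as [r [Hr H]].
  exists r. split; auto. intros x y Hx Hy. apply (proj2 (disk_iff _)). apply H; auto.
Qed.

Section PartA.
Variable h : C -> R.
Hypothesis Hh : reg in_disk h.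
Hypothesis Hl : forall z, in_disk z -> lap h z = 0.
Hypothesis Hu : forall z, in_disk z -> h z + (1 - nsq z) / 2 * (Re z * dxr h z + Im z * dyr h z) < 1.

Lemma partA_eps z0 eps : in_disk z0 -> 0 < eps -> h z0 <= 1 + eps.
Proof.
  intros Dz0 He. pose proof Dz0 as Dz0'. apply disk_iff in Dz0'.
  set (rho := nsq z0).
  set (K := fun z => nsq z <= rho).
  set (P := poly eps eps 0).
  set (phi := fun z => h z + P z).
  assert (KD : forall z, K z -> in_disk z).
  { intros z Kz. apply (proj2 (disk_iff z)). unfold K in Kz. unfold rho in Kz. lra. }
  assert (rphi : reg (fun z => in_disk z /\ True) phi).
  { apply (reg_plus in_disk (fun _ => True) h P opn_disk opn_True Hh (reg_poly _ _ _)). }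
  assert (Lphi : forall z, in_disk z -> lap phi z = 4 * eps).
  { intros z Dz. unfold phi. rewrite (lap_plus in_disk (fun _ => True) h P opn_disk opn_True Hh (reg_poly _ _ _) z (conj Dz I)).
    rewrite Hl by auto. unfold P. rewrite lap_poly. lra. }
  assert (Dphi : forall z, in_disk z -> dxr phi z = dxr h z + 2 * eps * Re z /\ dyr phi z = dyr h z + 2 * eps * Im z).
  { intros z Dz. unfold phi.
    rewrite (dxr_plus in_disk (fun _ => True) h P Hh (reg_poly _ _ _) z (conj Dz I)).
    rewrite (dyr_plus in_disk (fun _ => True) h P Hh (reg_poly _ _ _) z (conj Dz I)).
    unfold P. rewrite dxr_poly, dyr_poly. split; ring. }
  destruct (max_principle K (fun z => in_disk z /\ True) phi (-1) 1 (-1) 1) as [p [Kp [Hni Hmax]]].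
  - intros z Kz. unfold K, nsq in Kz. unfold rho in Kz.
    assert (Y1 : 0 <= Im z * Im z) by nra. assert (Y2 : 0 <= Re z * Re z) by nra.
    assert (X1 : Re z * Re z <= 1) by lra.
    assert (X2 : Im z * Im z <= 1) by lra.
    split; split; nra.
  - intros z Hz. unfold K in Hz. apply Rnot_le_lt in Hz.
    destruct (cont2_gt nsq rho z (cont2_nsq z) Hz) as [r [Hr H]]. exists r. split; auto.
    intros x y Hx Hy Kxy. specialize (H x y Hx Hy). unfold K in Kxy. lra.
  - exists z0. unfold K, rho. lra.
  - intros z Kz. split; auto.
  - exact rphi.
  - intros z Kz _. rewrite Lphi by auto. lra.
  - assert (Dp : in_disk p) by auto.
    assert (Ep : nsq p = rho).
    { destruct (Req_dec (nsq p) rho) as [E|E]; auto. exfalso. apply Hni.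
      assert (nsq p < rho) by (unfold K in Kp; lra).
      destruct (cont2_lt nsq rho p (cont2_nsq p) H) as [r [Hr Hr2]]. exists r. split; auto.
      intros x y Hx Hy. unfold K. apply Rlt_le. apply Hr2; auto. }
    destruct (Hh p Dp) as [Ax [Ay _]].
    destruct (Dphi p Dp) as [Dx Dy].
    assert (Rx : 0 <= Re p * dxr phi p).
    { destruct p as [px py]. simpl in *.
      pose proof (Derive_correct _ _ (proj1 (rphi (px,py) (conj Dp I)))) as Dv. simpl in Dv.
      destruct (Rtotal_order px 0) as [N|[Z|Pz]].
      - assert (dxr phi (px,py) <= 0); [|nra].
        apply (deriv_right_le (fun t => phi (t, py)) px _ 0 (- px) Dv ltac:(lra)).
        intros s Hs. assert (K (px + s, py)) by (unfold K; rewrite <- Ep; unfold nsq; simpl; nra).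
        specialize (Hmax _ H). lra.
      - rewrite Z. lra.
      - assert (- 0 <= dxr phi (px,py)); [|nra].
        apply (deriv_left_ge (fun t => phi (t, py)) px _ 0 px Dv ltac:(lra)).
        intros s Hs. assert (K (px - s, py)) by (unfold K; rewrite <- Ep; unfold nsq; simpl; nra).
        specialize (Hmax _ H). lra. }
    assert (Ry : 0 <= Im p * dyr phi p).
    { destruct p as [px py]. simpl in *.
      pose proof (Derive_correct _ _ (proj1 (proj2 (rphi (px,py) (conj Dp I))))) as Dv. simpl in Dv.
      destruct (Rtotal_order py 0) as [N|[Z|Pz]].
      - assert (dyr phi (px,py) <= 0); [|nra].
        apply (deriv_right_le (fun t => phi (px, t)) py _ 0 (- py) Dv ltac:(lra)).
        intros s Hs. assert (K (px, py + s)) by (unfold K; rewrite <- Ep; unfold nsq; simpl; nra).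
        specialize (Hmax _ H). lra.
      - rewrite Z. lra.
      - assert (- 0 <= dyr phi (px,py)); [|nra].
        apply (deriv_left_ge (fun t => phi (px, t)) py _ 0 py Dv ltac:(lra)).
        intros s Hs. assert (K (px, py - s)) by (unfold K; rewrite <- Ep; unfold nsq; simpl; nra).
        specialize (Hmax _ H). lra. }
    rewrite Dx in Rx. rewrite Dy in Ry.
    pose proof (Hu p Dp) as Up. rewrite Ep in Up.
    assert (Kz0 : K z0) by (unfold K, rho; lra).
    pose proof (Hmax z0 Kz0) as M0. unfold phi, P, poly in M0.
    
    assert (Sum : Re p * dxr h p + Im p * dyr h p >= - 2 * eps * rho).
    { rewrite <- Ep. unfold nsq. nra. }
    assert (0 <= rho < 1) by (unfold rho, nsq in *; nra).
    assert ((1 - rho) / 2 * (Re p * dxr h p + Im p * dyr h p) >= - eps).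
    { assert ((1 - rho)/2 * (Re p * dxr h p + Im p * dyr h p) >= (1 - rho)/2 * (- 2 * eps * rho)).
      { apply Rle_ge. apply Rmult_le_compat_l; lra. }
      nra. }
    assert (E1 : eps * (Re p * Re p) + eps * (Im p * Im p) = eps * rho) by (rewrite <- Ep; unfold nsq; ring).
    assert (E2 : eps * (Re z0 * Re z0) + eps * (Im z0 * Im z0) = eps * rho) by (unfold rho, nsq; ring).
    lra.
Qed.

Lemma partA z : in_disk z -> h z <= 1.
Proof. intros Dz. apply le_epsilon. intros eps He. apply partA_eps; auto. Qed.
End PartA.

Lemma Cmod_le_sum (w : C) : Cmod w <= Rabs (Re w) + Rabs (Im w).
Proof.
  unfold Cmod. rewrite <- (sqrt_pow2 (Rabs (Re w) + Rabs (Im w))).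
  2:{ pose proof (Rabs_pos (Re w)); pose proof (Rabs_pos (Im w)); lra. }
  apply sqrt_le_1_alt. change (fst w) with (Re w). change (snd w) with (Im w).
  pose proof (Rabs_pos (Re w)); pose proof (Rabs_pos (Im w)).
  rewrite <- (pow2_abs (Re w)), <- (pow2_abs (Im w)). nra.
Qed.

Lemma rect_in_disk z0 r z : 0 <= r -> 2 * r < 1 - Cmod z0 ->
  rect (Re z0 - r) (Re z0 + r) (Im z0 - r) (Im z0 + r) z -> in_disk z.
Proof.
  intros Hr Hr2 [[H1 H2] [H3 H4]]. unfold in_disk.
  assert (E : (z0 + (z - z0))%C = z).
  { destruct z, z0. unfold Cplus, Cminus, Copp, Cplus. simpl. f_equal; ring. }
  rewrite <- E. eapply Rle_lt_trans. apply Cmod_triangle.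
  eapply Rle_lt_trans. apply Rplus_le_compat_l. apply Cmod_le_sum.
  destruct z as [x y], z0 as [x0 y0]. simpl in *.
  assert (Rabs (x + - x0) <= r) by (apply Rabs_le_between; lra).
  assert (Rabs (y + - y0) <= r) by (apply Rabs_le_between; lra).
  lra.
Qed.

Lemma reg_of_C2 h : C2_on_disk h -> reg in_disk h.
Proof.
  intros HC z Dz. destruct (HC z Dz) as [A [B [Cc [_ [_ [F [G _]]]]]]].
  repeat split; auto. apply cont2_of. exact G.
Qed.

Section U.
Variable H : C -> C.
Let h1 := fun w => Re (H w).
Let h2 := fun w => Im (H w).

Lemma u_re z : Re (u_of H z) = h1 z + (1 - nsq z) / 2 * (Re z * dxr h1 z + Im z * dyr h1 z).
Proof.
  unfold u_of, dz, dzb, dx, dy. rewrite Cmod_sq. unfold h1.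
  generalize (dxr (fun w => Re (H w)) z) (dyr (fun w => Re (H w)) z)
             (dxr (fun w => Im (H w)) z) (dyr (fun w => Im (H w)) z).
  intros a b c d. destruct (H z) as [p q]. destruct z as [x y]. unfold nsq.
  simpl. field.
Qed.

Lemma u_im z : Im (u_of H z) = h2 z + (1 - nsq z) / 2 * (Re z * dxr h2 z + Im z * dyr h2 z).
Proof.
  unfold u_of, dz, dzb, dx, dy. rewrite Cmod_sq. unfold h2.
  generalize (dxr (fun w => Re (H w)) z) (dyr (fun w => Re (H w)) z)
             (dxr (fun w => Im (H w)) z) (dyr (fun w => Im (H w)) z).
  intros a b c d. destruct (H z) as [p q]. destruct z as [x y]. unfold nsq.
  simpl. field.
Qed.
End U.

Definition Uf (h : C -> R) (w : C) : R := h w + (1 - nsq w) / 2 * (Re w * dxr h w + Im w * dyr h w).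

Lemma aux_der (f1 f2 f3 : R -> R) x y : ex_derive f1 x -> ex_derive f2 x -> ex_derive f3 x ->
  is_derive (fun t => f1 t + (1 - (t * t + y * y)) / 2 * (t * f2 t + y * f3 t)) x
    (Derive f1 x - x * (x * f2 x + y * f3 x) + (1 - (x * x + y * y)) / 2 * (f2 x + x * Derive f2 x + y * Derive f3 x)).
Proof.
  intros E1 E2 E3. auto_derive.
  - repeat split; auto.
  - change (fun x0 => f1 x0) with f1. change (fun x0 => f2 x0) with f2. change (fun x0 => f3 x0) with f3.
    generalize (Derive f1 x) (Derive f2 x) (Derive f3 x) (f2 x) (f3 x). intros. field.
Qed.

Lemma dxr_Uf h (x y : R) : ex_derive (fun t => h (t, y)) x -> ex_derive (fun t => dxr h (t, y)) x ->
  ex_derive (fun t => dyr h (t, y)) x ->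
  dxr (Uf h) (x, y) = dxr h (x, y) - x * (x * dxr h (x, y) + y * dyr h (x, y))
     + (1 - (x * x + y * y)) / 2 * (dxr h (x, y) + x * dxr (dxr h) (x, y) + y * dxr (dyr h) (x, y)).
Proof.
  intros E1 E2 E3. unfold dxr at 1. simpl.
  apply is_derive_unique.
  exact (aux_der (fun t => h (t, y)) (fun t => dxr h (t, y)) (fun t => dyr h (t, y)) x y E1 E2 E3).
Qed.

Lemma dyr_Uf h (x y : R) : ex_derive (fun t => h (x, t)) y -> ex_derive (fun t => dyr h (x, t)) y ->
  ex_derive (fun t => dxr h (x, t)) y ->
  dyr (Uf h) (x, y) = dyr h (x, y) - y * (y * dyr h (x, y) + x * dxr h (x, y))
     + (1 - (y * y + x * x)) / 2 * (dyr h (x, y) + y * dyr (dyr h) (x, y) + x * dyr (dxr h) (x, y)).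
Proof.
  intros E1 E2 E3. unfold dyr at 1. simpl.
  apply is_derive_unique.
  apply (is_derive_ext (fun t => h (x, t) + (1 - (t * t + x * x)) / 2 * (t * dyr h (x, t) + x * dxr h (x, t)))).
  { intro t. unfold Uf, nsq. simpl. field. }
  exact (aux_der (fun t => h (x, t)) (fun t => dyr h (x, t)) (fun t => dxr h (x, t)) y x E1 E2 E3).
Qed.

Lemma dz_parts a b c d : Re (/ 2 * ((a, b) - Ci * (c, d)))%C = (a + d) / 2 /\
                          Im (/ 2 * ((a, b) - Ci * (c, d)))%C = (b - c) / 2 /\
                          Re (/ 2 * ((a, b) + Ci * (c, d)))%C = (a - d) / 2 /\
                          Im (/ 2 * ((a, b) + Ci * (c, d)))%C = (b + c) / 2.
Proof. simpl. repeat split; field. Qed.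

Lemma half_abs u v : Rabs ((u + v) / 2) + Rabs ((u - v) / 2) <= Rabs u + Rabs v.
Proof.
  unfold Rabs; repeat destruct Rcase_abs; lra.
Qed.

Lemma Cmod_dz_le f z :
  Cmod (dz f z) + Cmod (dzb f z) <= Rabs (dxr (fun w => Re (f w)) z) + Rabs (dxr (fun w => Im (f w)) z)
                    + Rabs (dyr (fun w => Re (f w)) z) + Rabs (dyr (fun w => Im (f w)) z).
Proof.
  pose proof (Cmod_le_sum (dz f z)) as X1. pose proof (Cmod_le_sum (dzb f z)) as X2.
  unfold dz, dzb, dx, dy in *.
  revert X1 X2.
  generalize (dxr (fun w => Re (f w)) z) (dxr (fun w => Im (f w)) z)
             (dyr (fun w => Re (f w)) z) (dyr (fun w => Im (f w)) z). intros a b c d X1 X2.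
  destruct (dz_parts a b c d) as [E1 [E2 [E3 E4]]].
  rewrite E1, E2 in X1. rewrite E3, E4 in X2.
  pose proof (half_abs a d). pose proof (half_abs b c).
  replace ((b + c) / 2) with ((c + b) / 2) in X2 by field.
  replace ((b - c) / 2) with (- ((c - b) / 2)) in X1 by field. rewrite Rabs_Ropp in X1.
  pose proof (half_abs c b). lra.
Qed.

Lemma im_le_Cmod c : Rabs (Im c) <= Cmod c.
Proof. eapply Rle_trans; [|apply Rmax_Cmod]. apply Rmax_r. Qed.

Lemma abs_le1_mul x Y : Rabs x <= 1 -> Rabs (x * Y) <= Rabs Y.
Proof.
  intros H. rewrite Rabs_mult. pose proof (Rabs_pos Y). pose proof (Rabs_pos x). nra.
Qed.

Lemma fin e d A B P Q x y : 0 < d <= 1 -> 0 <= e <= 2 * d -> Rabs x <= 1 -> Rabs y <= 1 ->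
  d * Rabs A <= 16 -> d * Rabs B <= 16 -> d * d * Rabs P <= 256 -> d * d * Rabs Q <= 256 ->
  e * Rabs (A - x * (x * A + y * B) + e / 2 * (A + x * P + y * Q)) <= 1200.
Proof.
  intros Hd He Hx Hy HA HB HP HQ.
  pose proof (abs_le1_mul x A Hx). pose proof (abs_le1_mul y B Hy).
  pose proof (abs_le1_mul x P Hx). pose proof (abs_le1_mul y Q Hy).
  set (a := Rabs A) in *. set (b := Rabs B) in *. set (p := Rabs P) in *. set (q := Rabs Q) in *.
  assert (a0 : 0 <= a) by apply Rabs_pos. assert (b0 : 0 <= b) by apply Rabs_pos.
  assert (p0 : 0 <= p) by apply Rabs_pos. assert (q0 : 0 <= q) by apply Rabs_pos.
  assert (T1 : Rabs (x * (x * A + y * B)) <= a + b).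
  { eapply Rle_trans. apply abs_le1_mul; auto. eapply Rle_trans. apply Rabs_triang.
    lra. }
  assert (T2 : Rabs (A + x * P + y * Q) <= a + p + q).
  { eapply Rle_trans. apply Rabs_triang. eapply Rle_trans. apply Rplus_le_compat_r. apply Rabs_triang.
    unfold a, b, p, q in *; lra. }
  assert (T3 : Rabs (e / 2 * (A + x * P + y * Q)) <= e / 2 * (a + p + q)).
  { rewrite Rabs_mult. rewrite (Rabs_pos_eq (e/2)) by lra. apply Rmult_le_compat_l; lra. }
  assert (T : Rabs (A - x * (x * A + y * B) + e / 2 * (A + x * P + y * Q)) <= 2 * a + b + e / 2 * (a + p + q)).
  { eapply Rle_trans. apply Rabs_triang. unfold Rminus.
    eapply Rle_trans. apply Rplus_le_compat_r. apply Rabs_triang. rewrite Rabs_Ropp. unfold a, b, p, q in *; lra. }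
  assert (ea : e * a <= 32) by nra.
  assert (eb : e * b <= 32) by nra.
  assert (ee : e * e <= 4 * (d * d)) by nra.
  assert (eea : e * e * a <= 64).
  { apply Rle_trans with (4 * (d * d) * a). apply Rmult_le_compat_r; lra. nra. }
  assert (eep : e * e * p <= 1024).
  { apply Rle_trans with (4 * (d * d) * p). apply Rmult_le_compat_r; lra. nra. }
  assert (eeq : e * e * q <= 1024).
  { apply Rle_trans with (4 * (d * d) * q). apply Rmult_le_compat_r; lra. nra. }
  apply Rle_trans with (e * (2 * a + b + e / 2 * (a + p + q))).
  - apply Rmult_le_compat_l; lra.
  - nra.
Qed.

Lemma bound1 h : reg in_disk h -> (forall z, in_disk z -> lap h z = 0) ->
  (forall z, in_disk z -> Rabs (Uf h z) < 1) -> forall z, in_disk z -> Rabs (h z) <= 1.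
Proof.
  intros Hr Hl Hu z Dz. apply Rabs_le_between. split.
  - assert (-1 * h z <= 1); [|lra].
    apply (partA (fun w => -1 * h w) (reg_scal in_disk h (-1) Hr)); auto.
    + intros w Dw. rewrite lap_scal, Hl; auto. lra.
    + intros w Dw. rewrite !dxr_scal, !dyr_scal. specialize (Hu w Dw). unfold Uf in Hu.
      apply Rabs_lt_between in Hu.
      set (X := Re w * dxr h w + Im w * dyr h w) in *.
      replace (Re w * (-1 * dxr h w) + Im w * (-1 * dyr h w)) with (- X) by (unfold X; ring).
      replace ((1 - nsq w) / 2 * - X) with (- ((1 - nsq w) / 2 * X)) by field. lra.
  - apply (partA h Hr Hl); auto. intros w Dw. specialize (Hu w Dw). unfold Uf in Hu.
    apply Rabs_lt_between in Hu. lra.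
Qed.

Section Derivs.
Variable h : C -> R.
Hypothesis HC : C2_on_disk h.
Hypothesis Hl : forall z, in_disk z -> lap h z = 0.
Hypothesis Hb : forall z, in_disk z -> Rabs (h z) <= 1.
Variables x0 y0 : R.
Hypothesis D0 : in_disk (x0, y0).
Let d := 1 - Cmod (x0, y0).
Let a := d / 8.

Lemma d_pos : 0 < d /\ d <= 1.
Proof. unfold d. unfold in_disk in D0. pose proof (Cmod_ge_0 (x0,y0)). lra. Qed.

Lemma G c : rect (x0 - 2 * a) (x0 + 2 * a) (y0 - 2 * a) (y0 + 2 * a) c ->
  Rabs (dxr h c) <= 2 * 1 / a /\ Rabs (dyr h c) <= 2 * 1 / a.
Proof.
  intros Hc. destruct d_pos as [dp d1]. destruct c as [cx cy].
  assert (Sub : forall z, rect (cx - a) (cx + a) (cy - a) (cy + a) z -> in_disk z).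
  { intros z Hz. apply (rect_in_disk (x0, y0) (3 * a)). unfold a; lra. unfold a; fold d; lra.
    destruct Hc as [[H1 H2] [H3 H4]]. destruct Hz as [[H5 H6] [H7 H8]]. simpl in *.
    split; split; lra. }
  apply (grad_abs in_disk h cx cy a 1 opn_disk (reg_of_C2 h HC)).
  - unfold a; lra.
  - exact Sub.
  - intros z Hz; apply Hl, Sub, Hz.
  - intros z Hz; apply Hb, Sub, Hz.
Qed.

Lemma first_bounds : d * Rabs (dxr h (x0, y0)) <= 16 /\ d * Rabs (dyr h (x0, y0)) <= 16.
Proof.
  destruct d_pos as [dp d1].
  assert (R0 : rect (x0 - 2 * a) (x0 + 2 * a) (y0 - 2 * a) (y0 + 2 * a) (x0, y0)).
  { unfold a. split; simpl; lra. }
  destruct (G _ R0) as [A B].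
  replace (2 * 1 / a) with (16 / d) in A, B by (unfold a; field; lra).
  split.
  - apply (Rmult_le_compat_l d) in A; [|lra]. replace (d * (16 / d)) with 16 in A by (field; lra). exact A.
  - apply (Rmult_le_compat_l d) in B; [|lra]. replace (d * (16 / d)) with 16 in B by (field; lra). exact B.
Qed.

Lemma second_bounds :
  d * d * Rabs (dxr (dxr h) (x0, y0)) <= 256 /\ d * d * Rabs (dxr (dyr h) (x0, y0)) <= 256 /\
  d * d * Rabs (dyr (dxr h) (x0, y0)) <= 256 /\ d * d * Rabs (dyr (dyr h) (x0, y0)) <= 256.
Proof.
  destruct d_pos as [dp d1].
  assert (Ha : 0 < a) by (unfold a; lra).
  assert (Kd : 2 * (2 * 1 / a) / a = 256 / (d * d)) by (unfold a; field; lra).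
  assert (Fin : forall X, Rabs X <= 2 * (2 * 1 / a) / a -> d * d * Rabs X <= 256).
  { intros X HX. rewrite Kd in HX. apply (Rmult_le_compat_l (d * d)) in HX; [|nra].
    replace (d * d * (256 / (d * d))) with 256 in HX by (field; lra). exact HX. }
  destruct (HC (x0, y0) D0) as [_ [_ [E3 [E4 [E5 [E6 _]]]]]]. simpl in E3, E4, E5, E6.
  assert (Sub2 : forall z, rect (x0 - 2 * a) (x0 + 2 * a) (y0 - 2 * a) (y0 + 2 * a) z -> in_disk z).
  { intros z Hz. apply (rect_in_disk (x0, y0) (2 * a)). lra. unfold a; fold d; lra. exact Hz. }
  pose proof (dq in_disk h x0 y0 a (2 * 1 / a) opn_disk (reg_of_C2 h HC) Ha Sub2
     (fun z Hz => Hl z (Sub2 z Hz)) (fun z Hz => proj1 (G z Hz))) as DQ1.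
  assert (SubS : forall z, rect (y0 - 2 * a) (y0 + 2 * a) (x0 - 2 * a) (x0 + 2 * a) z ->
            rect (x0 - 2 * a) (x0 + 2 * a) (y0 - 2 * a) (y0 + 2 * a) (swp z)).
  { intros z [[H1 H2] [H3 H4]]. split; split; assumption. }
  pose proof (dq (fun z => in_disk (swp z)) (fun w => h (swp w)) y0 x0 a (2 * 1 / a)
     (opn_swp _ opn_disk) (reg_swp _ _ (reg_of_C2 h HC)) Ha
     (fun z Hz => Sub2 _ (SubS z Hz))
     (fun z Hz => eq_trans (lap_swp h z) (Hl _ (Sub2 _ (SubS z Hz))))
     (fun z Hz => proj2 (G _ (SubS z Hz)))) as DQ2.
  split; [|split; [|split]]; apply Fin.
  - apply (deriv_abs_le (fun t => dxr h (t, y0)) x0 _ _ a (Derive_correct _ _ E3) Ha).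
    intros s Hs. exact (proj1 (DQ1 s Hs)).
  - apply (deriv_abs_le (fun t => dyr h (t, y0)) x0 _ _ a (Derive_correct _ _ E5) Ha).
    intros s Hs. exact (proj2 (DQ1 s Hs)).
  - apply (deriv_abs_le (fun t => dxr h (x0, t)) y0 _ _ a (Derive_correct _ _ E4) Ha).
    intros s Hs. exact (proj2 (DQ2 s Hs)).
  - apply (deriv_abs_le (fun t => dyr h (x0, t)) y0 _ _ a (Derive_correct _ _ E6) Ha).
    intros s Hs. exact (proj1 (DQ2 s Hs)).
Qed.
End Derivs.

Lemma comp_bound (h : C -> R) (HC : C2_on_disk h) (HL : forall z, in_disk z -> lap h z = 0)
  (Hb : forall z, in_disk z -> Rabs (h z) <= 1) x y : in_disk (x, y) ->
  (1 - (x * x + y * y)) * (Rabs (dxr (Uf h) (x, y)) + Rabs (dyr (Uf h) (x, y))) <= 2400.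
Proof.
  intros Dz.
  destruct (d_pos x y Dz) as [dp d1].
  destruct (first_bounds h HC HL Hb x y Dz) as [F1 F2].
  destruct (second_bounds h HC HL Hb x y Dz) as [S1 [S2 [S3 S4]]].
  destruct (HC (x, y) Dz) as [E1 [E2 [E3 [E4 [E5 [E6 _]]]]]]. simpl in E1, E2, E3, E4, E5, E6.
  rewrite (dxr_Uf h x y E1 E3 E5), (dyr_Uf h x y E2 E6 E4).
  set (d := 1 - Cmod (x, y)) in *.
  assert (Rx : Rabs x <= 1) by (pose proof (re_le_Cmod (x, y)); unfold in_disk in Dz; simpl in *; lra).
  assert (Ry : Rabs y <= 1) by (pose proof (im_le_Cmod (x, y)); unfold in_disk in Dz; simpl in *; lra).
  assert (Ee : 1 - (x * x + y * y) = (1 - Cmod (x, y)) * (1 + Cmod (x, y))).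
  { pose proof (Cmod_sq (x, y)) as Q. unfold nsq in Q; simpl in Q. nra. }
  assert (He : 0 <= 1 - (x * x + y * y) <= 2 * d).
  { rewrite Ee. unfold d. pose proof (Cmod_ge_0 (x, y)). unfold in_disk in Dz. split; nra. }
  pose proof (fin (1 - (x * x + y * y)) d _ _ _ _ x y (conj dp d1) He Rx Ry F1 F2 S1 S2) as T1.
  replace (1 - (y * y + x * x)) with (1 - (x * x + y * y)) by ring.
  pose proof (fin (1 - (x * x + y * y)) d _ _ _ _ y x (conj dp d1) He Ry Rx F2 F1 S4 S3) as T2.
  lra.
Qed.

Theorem corollary4 (H : C -> C) :
  harmonic_on_disk H ->
  (forall z, in_disk z -> in_disk (u_of H z)) ->
  exists c : R, 0 < c /\
    forall z, in_disk z ->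
      (1 - Cmod z ^ 2) * (Cmod (dz (u_of H) z) + Cmod (dzb (u_of H) z)) <= c.
Proof.
  intros [[HC1 HL1] [HC2 HL2]] Hu.
  exists 4801. split; [lra|].
  assert (U1 : forall z, in_disk z -> Rabs (Uf (fun w => Re (H w)) z) < 1).
  { intros z Dz. unfold Uf. rewrite <- u_re. eapply Rle_lt_trans. apply re_le_Cmod. apply Hu, Dz. }
  assert (U2 : forall z, in_disk z -> Rabs (Uf (fun w => Im (H w)) z) < 1).
  { intros z Dz. unfold Uf. rewrite <- u_im. eapply Rle_lt_trans. apply im_le_Cmod. apply Hu, Dz. }
  assert (B1 := bound1 _ (reg_of_C2 _ HC1) HL1 U1).
  assert (B2 := bound1 _ (reg_of_C2 _ HC2) HL2 U2).
  intros z Dz. destruct z as [x y].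
  pose proof (comp_bound _ HC1 HL1 B1 x y Dz) as T1.
  pose proof (comp_bound _ HC2 HL2 B2 x y Dz) as T2.
  pose proof (Cmod_dz_le (u_of H) (x, y)) as K.
  assert (Ex1 : dxr (fun w => Re (u_of H w)) (x, y) = dxr (Uf (fun w => Re (H w))) (x, y)).
  { unfold dxr. apply Derive_ext. intro t. apply u_re. }
  assert (Ey1 : dyr (fun w => Re (u_of H w)) (x, y) = dyr (Uf (fun w => Re (H w))) (x, y)).
  { unfold dyr. apply Derive_ext. intro t. apply u_re. }
  assert (Ex2 : dxr (fun w => Im (u_of H w)) (x, y) = dxr (Uf (fun w => Im (H w))) (x, y)).
  { unfold dxr. apply Derive_ext. intro t. apply u_im. }
  assert (Ey2 : dyr (fun w => Im (u_of H w)) (x, y) = dyr (Uf (fun w => Im (H w))) (x, y)).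
  { unfold dyr. apply Derive_ext. intro t. apply u_im. }
  rewrite Ex1, Ey1, Ex2, Ey2 in K.
  rewrite Cmod_sq. unfold nsq. simpl.
  assert (He : 0 <= 1 - (x * x + y * y)).
  { pose proof (Cmod_sq (x, y)) as Q. unfold nsq in Q; simpl in Q. unfold in_disk in Dz.
    pose proof (Cmod_ge_0 (x, y)). nra. }
  apply Rle_trans with ((1 - (x * x + y * y)) *
     (Rabs (dxr (Uf (fun w => Re (H w))) (x, y)) + Rabs (dxr (Uf (fun w => Im (H w))) (x, y)) +
      Rabs (dyr (Uf (fun w => Re (H w))) (x, y)) + Rabs (dyr (Uf (fun w => Im (H w))) (x, y)))).
  - apply Rmult_le_compat_l; auto.
  - lra.
Qed.
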